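(* Every metric space $(X,d)$ with the separated approximation property (SAP) has the locally finite approximation property (LFAP).
   Context: A metric space $(X,d)$ has the separated approximation property (SAP) if for each $\varepsilon>0$ there is a sequence of continuous maps $f_n:X\to X$, $n\in\omega$, such that each $f_n$ is $\varepsilon$-homotopic to $\mathrm{id}_X$ and $\inf_{n\ne m} d(f_n(X),f_m(X))>0$, where $d(A,B)=\inf\{d(a,b):a\in A,\ b\in B\}$. Two maps $f,g:A\to X$ are $\varepsilon$-homotopic if there is a homotopy $(h_t)_{t\in[0,1]}:A\to X$ with $h_0=f$, $h_1=g$ and $\operatorname{diam}\{h_t(a):t\in[0,1]\}\le\varepsilon$ for all $a\in A$. A topological space $X$ has the locally finite approximation property (LFAP) if for each open cover $\mathcal U$ of $X$ there is a sequence of continuous maps $f_n:X\to X$, $n\in\omega$, each $\mathcal U$-near to $\mathrm{id}_X$ (for every $x$ some $U\in\mathcal U$ contains both $x$ and $f_n(x)$), such that the family $(f_n(X))_{n\in\omega}$ is locally finite in $X$. *)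

(* Defs.v *)
From Stdlib Require Import Reals.
Open Scope R_scope.

Definition is_metric {X : Type} (d : X -> X -> R) : Prop :=
  (forall x y, 0 <= d x y) /\
  (forall x y, d x y = 0 <-> x = y) /\
  (forall x y, d x y = d y x) /\
  (forall x y z, d x z <= d x y + d y z).

Definition m_open {X : Type} (d : X -> X -> R) (U : X -> Prop) : Prop :=
  forall x, U x -> exists r, 0 < r /\ forall y, d x y < r -> U y.

Definition m_continuous {X : Type} (d : X -> X -> R) (f : X -> X) : Prop :=
  forall x eps, 0 < eps -> exists delta, 0 < delta /\
    forall y, d x y < delta -> d (f x) (f y) < eps.

Definition homotopy_continuous {X : Type} (d : X -> X -> R)
    (h : R -> X -> X) : Prop :=
  forall t x eps, 0 <= t <= 1 -> 0 < eps -> exists delta, 0 < delta /\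
    forall s y, 0 <= s <= 1 -> Rabs (s - t) < delta -> d x y < delta ->
      d (h t x) (h s y) < eps.

Definition eps_homotopic {X : Type} (d : X -> X -> R) (eps : R)
    (f g : X -> X) : Prop :=
  exists h : R -> X -> X,
    homotopy_continuous d h /\
    (forall a, h 0 a = f a) /\ (forall a, h 1 a = g a) /\
    (forall a t s, 0 <= t <= 1 -> 0 <= s <= 1 -> d (h t a) (h s a) <= eps).

(* Separated approximation property.  The condition
   inf_{n<>m} d(f_n(X), f_m(X)) > 0, with d(A,B) = inf{d(a,b)}, is written
   out as: some delta > 0 is a lower bound of all these distances. *)
Definition SAP {X : Type} (d : X -> X -> R) : Prop :=
  forall eps, 0 < eps ->
    exists f : nat -> X -> X,
      (forall n, m_continuous d (f n)) /\
      (forall n, eps_homotopic d eps (f n) (fun x => x)) /\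
      (exists delta, 0 < delta /\
         forall n m, n <> m -> forall x y, delta <= d (f n x) (f m y)).

Definition open_cover {X : Type} (d : X -> X -> R)
    (C : (X -> Prop) -> Prop) : Prop :=
  (forall U, C U -> m_open d U) /\ (forall x, exists U, C U /\ U x).

Definition cover_near {X : Type} (C : (X -> Prop) -> Prop) (f g : X -> X) : Prop :=
  forall x, exists U, C U /\ U (f x) /\ U (g x).

Definition locally_finite {X : Type} (d : X -> X -> R)
    (A : nat -> X -> Prop) : Prop :=
  forall x, exists V, m_open d V /\ V x /\
    exists N : nat, forall n, (exists y, V y /\ A n y) -> (n < N)%nat.

Definition LFAP {X : Type} (d : X -> X -> R) : Prop :=
  forall C, open_cover d C ->
    exists f : nat -> X -> X,
      (forall n, m_continuous d (f n)) /\
      (forall n, cover_near C (fun x => x) (f n)) /\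
      locally_finite d (fun n y => exists x, f n x = y).

(* Main.v *)
Require Import Defs.
From Stdlib Require Import Reals Lra Lia Arith ZArith Classical ClassicalEpsilon.
Open Scope R_scope.

Definition fl (u : R) : nat := Z.to_nat (up u - 1).

Lemma fl_spec u : 0 <= u -> INR (fl u) <= u < INR (fl u) + 1.
Proof.
  intros Hu. destruct (archimed u) as [H1 H2].
  assert (Hp : (0 < up u)%Z) by (apply lt_0_IZR; lra).
  unfold fl. rewrite INR_IZR_INZ, Z2Nat.id by lia.
  rewrite minus_IZR. simpl. lra.
Qed.

Lemma fl_unique u j : INR j <= u < INR j + 1 -> fl u = j.
Proof.
  intros [H1 H2].
  assert (Hu : 0 <= u) by (pose proof (pos_INR j); lra).
  destruct (fl_spec u Hu) as [H3 H4].
  destruct (Nat.lt_trichotomy (fl u) j) as [Hl|[Hl|Hl]]; auto.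
  - exfalso.
    assert (INR (S (fl u)) <= INR j) by (apply le_INR; lia).
    rewrite S_INR in H. lra.
  - assert (INR (S j) <= INR (fl u)) by (apply le_INR; lia).
    rewrite S_INR in H. lra.
Qed.

Lemma parity j : exists k, (j = (2*k)%nat /\ Nat.even j = true /\ Nat.div2 j = k)
   \/ (j = S (2*k) /\ Nat.even j = false /\ Nat.div2 j = k).
Proof.
  destruct (Nat.Even_or_Odd j) as [[k Hk]|[k Hk]]; subst; exists k.
  - left. split; auto. split. apply Nat.even_even. apply Nat.div2_double.
  - right. replace (2*k+1)%nat with (S (2*k)) by lia. split; auto. split.
    rewrite <- Nat.add_1_r. apply Nat.even_odd. apply Nat.div2_succ_double.
Qed.

Definition Pth {X : Type} (H : nat -> R -> X -> X) (j : nat) (t : R) (x : X) : X :=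
  if Nat.even j then H (S (Nat.div2 j)) (1 - t) (H (Nat.div2 j) 0 x)
  else H (S (Nat.div2 j)) 0 (H (Nat.div2 j) t x).

Definition fam_ok {X : Type} (d : X -> X -> R) (H : nat -> R -> X -> X) (e : nat -> R) :=
  (forall k, homotopy_continuous d (H k)) /\ (forall k, m_continuous d (H k 0)) /\
  (forall k a, H k 1 a = a) /\
  (forall k a t s, 0 <= t <= 1 -> 0 <= s <= 1 -> d (H k t a) (H k s a) <= e k).

Lemma Pth_glue {X : Type} (d : X -> X -> R) H e j x : fam_ok d H e ->
  Pth H j 1 x = Pth H (S j) 0 x.
Proof.
  intros (_ & _ & H1 & _).
  destruct (parity j) as [k [(-> & _ & _)|(-> & _ & _)]]; unfold Pth.
  - replace (S (2*k)) with (2*k+1)%nat by lia.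
    rewrite Nat.even_even, Nat.even_odd, Nat.div2_double, Nat.div2_odd'.
    replace (1-1) with 0 by ring. reflexivity.
  - replace (S (S (2*k))) with (2*(S k))%nat by lia.
    replace (S (2*k)) with (2*k+1)%nat by lia.
    rewrite Nat.even_even, Nat.even_odd, Nat.div2_double, Nat.div2_odd'.
    replace (1-0) with 1 by ring. rewrite !H1. reflexivity.
Qed.

Lemma Pth_cont {X : Type} (d : X -> X -> R) H e j t0 x0 eps : fam_ok d H e ->
  0 <= t0 <= 1 -> 0 < eps -> exists del, 0 < del /\ forall t y, 0 <= t <= 1 ->
  Rabs (t - t0) < del -> d x0 y < del -> d (Pth H j t0 x0) (Pth H j t y) < eps.
Proof.
  intros (HC & FC & _ & _) Ht0 He. unfold Pth.
  destruct (Nat.even j).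
  - set (k := Nat.div2 j).
    destruct (HC (S k) (1 - t0) (H k 0 x0) eps ltac:(lra) He) as [d1 [Hd1 P1]].
    destruct (FC k x0 d1 Hd1) as [d2 [Hd2 P2]].
    exists (Rmin d1 d2). split. apply Rmin_glb_lt; auto.
    intros t y Ht Htt Hy. pose proof (Rmin_l d1 d2). pose proof (Rmin_r d1 d2). apply P1.
    + lra.
    + replace (1 - t - (1 - t0)) with (-(t - t0)) by ring. rewrite Rabs_Ropp. lra.
    + apply P2. lra.
  - set (k := Nat.div2 j).
    destruct (FC (S k) (H k t0 x0) eps He) as [d1 [Hd1 P1]].
    destruct (HC k t0 x0 d1 Ht0 Hd1) as [d2 [Hd2 P2]].
    exists d2. split; [auto|]. intros t y Ht Htt Hy. apply P1. apply P2; auto.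
Qed.

Lemma Pth_disp {X : Type} (d : X -> X -> R) (Hd : is_metric d) H e j t x : fam_ok d H e ->
  0 <= t <= 1 -> d x (Pth H j t x) <= e (Nat.div2 j) + e (S (Nat.div2 j)).
Proof.
  intros (HC & FC & H1 & HD) Ht. destruct Hd as (_ & _ & Hs & Ht3). unfold Pth.
  set (k := Nat.div2 j). destruct (Nat.even j).
  - eapply Rle_trans. apply (Ht3 _ (H k 0 x)).
    apply Rplus_le_compat.
    + rewrite <- (H1 k x) at 1. apply HD; lra.
    + rewrite <- (H1 (S k) (H k 0 x)) at 1. apply HD; lra.
  - eapply Rle_trans. apply (Ht3 _ (H k t x)).
    apply Rplus_le_compat.
    + rewrite <- (H1 k x) at 1. apply HD; lra.
    + rewrite <- (H1 (S k) (H k t x)) at 1. apply HD; lra.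
Qed.

Lemma Pth_assoc {X : Type} (d : X -> X -> R) (Hd : is_metric d) H e j t x : fam_ok d H e ->
  (forall k, 0 <= e k) -> 0 <= t <= 1 -> exists m, (m = Nat.div2 j \/ m = S (Nat.div2 j)) /\
  exists w, d (Pth H j t x) (H m 0 w) <= e (S m).
Proof.
  intros (HC & FC & H1 & HD) He Ht. destruct Hd as (_ & Hz & Hs & Ht3). unfold Pth.
  set (k := Nat.div2 j). destruct (Nat.even j).
  - exists k. split; auto. exists x.
    rewrite <- (H1 (S k) (H k 0 x)) at 2. apply HD; lra.
  - exists (S k). split; auto. exists (H k t x).
    replace (d _ _) with 0. apply He. symmetry. apply Hz. reflexivity.
Qed.

Definition Gam {X : Type} (H : nat -> R -> X -> X) (u : R) (x : X) : X :=
  Pth H (fl u) (u - INR (fl u)) x.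

Lemma Gam_cont {X : Type} (d : X -> X -> R) (Hd : is_metric d) H e u0 x0 eps : fam_ok d H e ->
  0 <= u0 -> 0 < eps -> exists del, 0 < del /\ forall u y, 0 <= u ->
  Rabs (u - u0) < del -> d x0 y < del -> d (Gam H u0 x0) (Gam H u y) < eps.
Proof.
  intros Hf Hu0 He. pose proof Hd as (Hp & Hz & Hs & Ht3).
  unfold Gam. destruct (fl_spec u0 Hu0) as [F1 F2]. remember (fl u0) as j0 eqn:Ej0.
  destruct (Pth_cont d H e j0 (u0 - INR j0) x0 (eps/2) Hf ltac:(lra) ltac:(lra)) as [d1 [Hd1 P1]].
  assert (Hge : forall u y, INR j0 <= u -> u < INR j0 + 1 -> Rabs (u - u0) < d1 -> d x0 y < d1 ->
     d (Pth H j0 (u0 - INR j0) x0) (Pth H (fl u) (u - INR (fl u)) y) < eps).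
  { intros u y H1 H2 H3 H4. assert (fl u = j0) as -> by (apply fl_unique; lra).
    eapply Rlt_trans. apply P1; auto. lra.
    replace (u - INR j0 - (u0 - INR j0)) with (u - u0) by ring. auto. lra. }
  destruct j0 as [|j1].
  - exists (Rmin d1 (1 - (u0 - INR 0))). split. apply Rmin_glb_lt; lra.
    intros u y Hu Huu Hy. pose proof (Rmin_l d1 (1 - (u0 - INR 0))). pose proof (Rmin_r d1 (1 - (u0 - INR 0))).
    apply Hge; try lra. simpl; lra. apply Rabs_def2 in Huu. lra.
  - destruct (Pth_cont d H e j1 1 x0 (eps/2) Hf ltac:(lra) ltac:(lra)) as [d2 [Hd2 P2]].
    set (t0 := u0 - INR (S j1)) in *.
    exists (Rmin (Rmin d1 d2) (1 - t0)). assert (0 <= t0 < 1) by (unfold t0; lra). split. repeat apply Rmin_glb_lt; lra.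
    intros u y Hu Huu Hy. pose proof (Rmin_l (Rmin d1 d2) (1 - t0)). pose proof (Rmin_r (Rmin d1 d2) (1 - t0)).
    pose proof (Rmin_l d1 d2). pose proof (Rmin_r d1 d2).
    pose proof Huu as Huu'. apply Rabs_def2 in Huu'. unfold t0 in *. rewrite S_INR in *.
    destruct (Rle_lt_dec (INR j1 + 1) u) as [Hle|Hlt].
    + apply Hge; try lra. 
    + assert (fl u = j1) as -> by (apply fl_unique; lra).
      eapply Rle_lt_trans. apply (Ht3 _ (Pth H j1 1 x0)).
      replace eps with (eps/2 + eps/2) by field. apply Rplus_lt_compat.
      * rewrite (Pth_glue d H e j1 x0 Hf).
        apply P1. lra. apply Rabs_def1; lra.
        rewrite (proj2 (Hz x0 x0) eq_refl). lra.
      * apply P2. split; lra. apply Rabs_def1; lra. lra.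
Qed.

Lemma not_ub (E : R -> Prop) b : ~ (forall r, E r -> r <= b) -> exists r, E r /\ b < r.
Proof.
  intros Hn. apply NNPP. intros Hc. apply Hn. intros r Hr.
  destruct (Rle_lt_dec r b); auto. exfalso; apply Hc; eauto.
Qed.

Lemma rho_ex {X : Type} (d : X -> X -> R) (Hd : is_metric d) C : open_cover d C ->
  exists rho : X -> R, (forall x, 0 < rho x <= 1) /\
  (forall x, exists U, C U /\ forall y, d x y < rho x / 2 -> U y) /\
  (forall x y, rho x <= rho y + d x y).
Proof.
  intros [Co Cc]. destruct Hd as (Hp & Hz & Hs & Ht3).
  set (E := fun x r => 0 < r <= 1 /\ exists U, C U /\ forall y, d x y < r -> U y).
  assert (Hb : forall x, bound (E x)).
  { intros x. exists 1. intros r [Hr _]. lra. }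
  assert (Hn : forall x, exists r, E x r).
  { intros x. destruct (Cc x) as [U [HU Ux]]. destruct (Co U HU x Ux) as [r [Hr Pr]].
    exists (Rmin r 1). split. split. apply Rmin_glb_lt; lra. apply Rmin_r.
    exists U. split; auto. intros y Hy. apply Pr. pose proof (Rmin_l r 1). lra. }
  exists (fun x => proj1_sig (completeness (E x) (Hb x) (Hn x))).
  assert (L : forall x, is_lub (E x) (proj1_sig (completeness (E x) (Hb x) (Hn x))))
    by (intros x; apply proj2_sig).
  assert (Pos : forall x, 0 < proj1_sig (completeness (E x) (Hb x) (Hn x)) <= 1).
  { intros x. destruct (L x) as [L1 L2]. destruct (Hn x) as [r Hr].
    pose proof (L1 r Hr). pose proof Hr as [[Hr1 Hr2] _]. split. lra.
    apply L2. intros s [[Hs1 Hs2] _]. auto. }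
  split; [exact Pos|split].
  - intros x. pose proof (Pos x) as Px. destruct (L x) as [L1 L2].
    set (rx := proj1_sig (completeness (E x) (Hb x) (Hn x))) in *.
    destruct (not_ub (E x) (rx/2)) as [r [[_ [U [HU PU]]] Hr]].
    { intros Hc. specialize (L2 (rx/2) Hc). lra. }
    exists U. split; auto. intros y Hy. apply PU. lra.
  - intros x y. pose proof (Pos y). pose proof (Hp x y).
    destruct (L x) as [L1 L2]. destruct (L y) as [L1' L2'].
    set (rx := proj1_sig (completeness (E x) (Hb x) (Hn x))) in *.
    set (ry := proj1_sig (completeness (E y) (Hb y) (Hn y))) in *.
    destruct (Rle_lt_dec rx (ry + d x y)) as [Hl|Hl]; auto. exfalso.
    destruct (not_ub (E x) (ry + d x y)) as [r [[[Hr1 Hr2] [U [HU PU]]] Hr]].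
    { intros Hc. specialize (L2 _ Hc). lra. }
    assert (E y (r - d x y)).
    { split. lra. exists U. split; auto. intros z Hz'. apply PU.
      pose proof (Ht3 x y z). lra. }
    specialize (L1' _ H1). lra.
Qed.

Lemma fin_bound (P : nat -> nat -> Prop) M :
  (forall m n n', (m <= M)%nat -> P m n -> P m n' -> n = n') ->
  exists N, forall n, (exists m, (m <= M)%nat /\ P m n) -> (n < N)%nat.
Proof.
  induction M as [|M IH]; intros Hu.
  - destruct (classic (exists n, P O n)) as [[n0 Hn0]|Hn].
    + exists (S n0). intros n [m [Hm Pm]]. assert (m = O) by lia. subst.
      rewrite (Hu O n n0); auto.
    + exists O. intros n [m [Hm Pm]]. assert (m = O) by lia. subst. exfalso; eauto.
  - destruct IH as [N1 HN1]. { intros m n n' Hm. apply Hu. lia. }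
    destruct (classic (exists n, P (S M) n)) as [[n0 Hn0]|Hn].
    + exists (Nat.max N1 (S n0)). intros n [m [Hm Pm]].
      destruct (Nat.eq_dec m (S M)) as [->|Hne].
      * rewrite (Hu (S M) n n0); auto; lia.
      * assert (n < N1)%nat by (apply HN1; exists m; split; auto; lia). lia.
    + exists N1. intros n [m [Hm Pm]].
      destruct (Nat.eq_dec m (S M)) as [->|Hne].
      * exfalso; eauto.
      * apply HN1; exists m; split; auto; lia.
Qed.

Fixpoint mind (f : nat -> R) (M : nat) : R :=
  match M with O => f O | S M' => Rmin (mind f M') (f (S M')) end.

Lemma mind_le f M m : (m <= M)%nat -> mind f M <= f m.
Proof.
  induction M as [|M IH]; intros Hm; simpl.
  - assert (m = O) by lia. subst. lra.
  - destruct (Nat.eq_dec m (S M)) as [->|Hne]. apply Rmin_r.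
    eapply Rle_trans. apply Rmin_l. apply IH. lia.
Qed.

Lemma mind_pos f M : (forall m, 0 < f m) -> 0 < mind f M.
Proof.
  intros Hf. induction M; simpl; auto. apply Rmin_glb_lt; auto.
Qed.

Fixpoint eseq (D : R -> R) (k : nat) : R :=
  match k with O => /16 | S k' => Rmin (/(16 * (INR k' + 2))) (D (eseq D k') / 8) end.

Lemma eseq_pos D : (forall eps, 0 < eps -> 0 < D eps) ->
  forall k, 0 < eseq D k /\ eseq D k <= /(16 * (INR k + 1)).
Proof.
  intros HD k. induction k as [|k [IH1 IH2]]; simpl.
  - split; [lra|]. simpl. lra.
  - split. apply Rmin_glb_lt. apply Rinv_0_lt_compat. pose proof (pos_INR k); lra.
    pose proof (HD _ IH1); lra.
    eapply Rle_trans. apply Rmin_l. right. f_equal. destruct k; simpl; ring.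
Qed.

Lemma sap_choice {X : Type} (d : X -> X -> R) : SAP d ->
  exists (HH : R -> nat -> R -> X -> X) (D : R -> R), forall eps, 0 < eps ->
  (forall n, m_continuous d (HH eps n 0)) /\ (forall n, homotopy_continuous d (HH eps n)) /\
  (forall n a, HH eps n 1 a = a) /\
  (forall n a t s, 0 <= t <= 1 -> 0 <= s <= 1 -> d (HH eps n t a) (HH eps n s a) <= eps) /\
  0 < D eps /\ (forall n m, n <> m -> forall x y, D eps <= d (HH eps n 0 x) (HH eps m 0 y)).
Proof.
  intros Hs.
  assert (Hp : forall eps, exists p : (nat -> R -> X -> X) * R, 0 < eps ->
    (forall n, m_continuous d (fst p n 0)) /\ (forall n, homotopy_continuous d (fst p n)) /\
    (forall n a, fst p n 1 a = a) /\
    (forall n a t s, 0 <= t <= 1 -> 0 <= s <= 1 -> d (fst p n t a) (fst p n s a) <= eps) /\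
    0 < snd p /\ (forall n m, n <> m -> forall x y, snd p <= d (fst p n 0 x) (fst p m 0 y))).
  { intros eps. destruct (classic (0 < eps)) as [He|He].
    - destruct (Hs eps He) as [f [Hc [Hh [del [Hdel Hsep]]]]].
      set (hh := fun n => proj1_sig (constructive_indefinite_description _ (Hh n))).
      assert (Hhh : forall n, homotopy_continuous d (hh n) /\ (forall a, hh n 0 a = f n a) /\
        (forall a, hh n 1 a = a) /\
        (forall a t s, 0 <= t <= 1 -> 0 <= s <= 1 -> d (hh n t a) (hh n s a) <= eps)).
      { intros n. exact (proj2_sig (constructive_indefinite_description _ (Hh n))). }
      exists (hh, del). intros _. simpl. split; [|split; [|split; [|split; [|split]]]].
      + intros n x e0 He0. destruct (Hhh n) as (_ & H0 & _).
        destruct (Hc n x e0 He0) as [dl [Hdl P]]. exists dl. split; auto.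
        intros y Hy. rewrite !H0. auto.
      + intros n. apply Hhh.
      + intros n. apply Hhh.
      + intros n. apply Hhh.
      + auto.
      + intros n m Hnm x y. destruct (Hhh n) as (_ & H0 & _). destruct (Hhh m) as (_ & H0' & _).
        rewrite H0, H0'. auto.
    - exists ((fun _ _ x => x), 0). intros Hc. contradiction. }
  exists (fun eps => fst (proj1_sig (constructive_indefinite_description _ (Hp eps)))).
  exists (fun eps => snd (proj1_sig (constructive_indefinite_description _ (Hp eps)))).
  intros eps He. exact (proj2_sig (constructive_indefinite_description _ (Hp eps)) He).
Qed.

Lemma arith1 rho K B : 0 < rho -> 0 < K -> B = /(16*K) -> /rho < 2*K -> 2*B < rho/2.
Proof.
  intros Hr HK HB Hi.
  assert (1 < 2*K*rho).
  { apply Rmult_lt_compat_l with (r := rho) in Hi; auto. rewrite Rinv_r in Hi; lra. }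
  assert (B*(16*K) = 1) by (subst; field; lra). nra.
Qed.

Lemma inv_cont {X : Type} (d : X -> X -> R) (rho : X -> R) x eps :
  (forall x, 0 < rho x) -> (forall x y, rho x <= rho y + d x y) -> (forall x y, d x y = d y x) ->
  0 < eps -> exists del, 0 < del /\ forall y, d x y < del -> Rabs (/ rho y - / rho x) < eps.
Proof.
  intros Hp HL Hs He. pose proof (Hp x) as Hx.
  exists (Rmin (rho x / 2) (eps * rho x * rho x / 2)). split.
  { apply Rmin_glb_lt. lra. apply Rmult_lt_0_compat; [|lra]. repeat apply Rmult_lt_0_compat; lra. }
  intros y Hy. pose proof (Rmin_l (rho x / 2) (eps * rho x * rho x / 2)).
  pose proof (Rmin_r (rho x / 2) (eps * rho x * rho x / 2)).
  pose proof (HL x y). pose proof (HL y x). rewrite (Hs y x) in *. pose proof (Hp y).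
  assert (Hdiff : Rabs (rho x - rho y) <= d x y). apply Rabs_le. split; lra.
  replace (/ rho y - / rho x) with ((rho x - rho y) * / (rho x * rho y)) by (field; lra).
  rewrite Rabs_mult, (Rabs_pos_eq (/ _)) by (apply Rlt_le, Rinv_0_lt_compat, Rmult_lt_0_compat; lra).
  assert (/ (rho x * rho y) <= 2 / (rho x * rho x)).
  { replace (2 / (rho x * rho x)) with (/ (rho x * rho x / 2)) by (field; lra).
    apply Rinv_le_contravar. nra.
    assert (rho x / 2 <= rho y) by lra. nra. }
  assert (0 <= / (rho x * rho y)) by (apply Rlt_le, Rinv_0_lt_compat, Rmult_lt_0_compat; lra).
  apply Rle_lt_trans with (d x y * (2 / (rho x * rho x))).
  { apply Rmult_le_compat; auto. apply Rabs_pos. }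
  apply Rlt_le_trans with (eps * rho x * rho x / 2 * (2 / (rho x * rho x))).
  { apply Rmult_lt_compat_r. apply Rdiv_lt_0_compat; [lra|]. apply Rmult_lt_0_compat; lra. lra. }
  right. field. lra.
Qed.

Theorem lemma1 (X : Type) (d : X -> X -> R) (Hd : is_metric d) :
  SAP d -> LFAP d.
Proof.
  intros Hsap C Hcov.
  destruct (rho_ex d Hd C Hcov) as [rho [Rp [Rb RL]]].
  destruct (sap_choice d Hsap) as [HH [D HHs]].
  pose proof Hd as (Hp & Hz & Hs & Ht3).
  assert (Dpos : forall eps, 0 < eps -> 0 < D eps) by (intros eps He; apply (HHs eps He)).
  pose proof (eseq_pos D Dpos) as Ep.
  assert (Es : forall k, eseq D (S k) <= D (eseq D k) / 8) by (intros k; simpl; apply Rmin_r).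
  set (e := eseq D) in *.
  set (Hf := fun n k => HH (e k) n).
  assert (Fok : forall n, fam_ok d (Hf n) e).
  { intros n. unfold fam_ok, Hf. split; [|split; [|split]].
    - intros k. apply (HHs (e k) (proj1 (Ep k))).
    - intros k. apply (HHs (e k) (proj1 (Ep k))).
    - intros k. apply (HHs (e k) (proj1 (Ep k))).
    - intros k. apply (HHs (e k) (proj1 (Ep k))). }
  assert (Ee : forall k, 0 <= e k) by (intros k; pose proof (proj1 (Ep k)); lra).
  set (u := fun x => / rho x).
  assert (Hu0 : forall x, 0 <= u x).
  { intros x. unfold u. apply Rlt_le, Rinv_0_lt_compat. apply Rp. }
  set (g := fun n x => Gam (Hf n) (u x) x).
  assert (Disp : forall n x, d x (g n x) < rho x / 2).
  { intros n x. unfold g, Gam. destruct (fl_spec (u x) (Hu0 x)) as [F1 F2].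
    remember (fl (u x)) as j eqn:Ej.
    eapply Rle_lt_trans. apply (Pth_disp d Hd (Hf n) e j (u x - INR j) x (Fok n)). lra.
    assert (Hk : exists k, Nat.div2 j = k /\ INR j <= 2 * (INR k + 1) - 1).
    { destruct (parity j) as [k [(Hj & _ & Hk)|(Hj & _ & Hk)]]; exists k; split; auto;
      rewrite Hj; try rewrite S_INR; rewrite mult_INR; simpl; lra. }
    destruct Hk as [k [-> Hk]].
    pose proof (Ep k) as [Ek1 Ek2]. pose proof (Ep (S k)) as [Ek3 Ek4].
    assert (/ (16 * (INR (S k) + 1)) <= / (16 * (INR k + 1))).
    { apply Rinv_le_contravar. pose proof (pos_INR k); lra. rewrite S_INR; lra. }
    assert (2 * / (16 * (INR k + 1)) < rho x / 2).
    { apply (arith1 (rho x) (INR k + 1)). apply Rp. pose proof (pos_INR k); lra. reflexivity.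
      fold (u x). lra. }
    lra. }
  exists g. split; [|split].
  - intros n x0 eps He.
    destruct (Gam_cont d Hd (Hf n) e (u x0) x0 eps (Fok n) (Hu0 x0) He) as [d1 [Hd1 P1]].
    destruct (inv_cont d rho x0 d1 (fun x => proj1 (Rp x)) RL Hs Hd1) as [d2 [Hd2 P2]].
    exists (Rmin d1 d2). split. apply Rmin_glb_lt; auto.
    intros y Hy. pose proof (Rmin_l d1 d2). pose proof (Rmin_r d1 d2).
    unfold g. apply P1. apply Hu0. apply P2. lra. lra.
  - intros n x. destruct (Rb x) as [U [HU PU]]. exists U. split; auto. split.
    + apply PU. rewrite (proj2 (Hz x x) eq_refl). pose proof (Rp x); lra.
    + apply PU. apply Disp.
  - intros x0. pose proof (Rp x0) as [Hr0 _].
    set (M := S (fl (/ ((rho x0) / 3)))).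
    set (m0 := mind (fun m => D (e m)) M).
    assert (Hm0 : 0 < m0) by (apply mind_pos; intros m; apply Dpos, Ep).
    set (r := Rmin ((rho x0) / 2) (m0 / 4)).
    assert (Hr : 0 < r) by (apply Rmin_glb_lt; lra).
    pose proof (Rmin_l ((rho x0)/2) (m0/4)) as Hr1. pose proof (Rmin_r ((rho x0)/2) (m0/4)) as Hr2. fold r in Hr1, Hr2.
    exists (fun z => d x0 z < r). split; [|split].
    + intros z Hzz. exists (r - d x0 z). split. lra. intros y Hy. pose proof (Ht3 x0 z y). lra.
    + rewrite (proj2 (Hz x0 x0) eq_refl). lra.
    + destruct (fin_bound (fun m n => exists z, d x0 z < r /\ exists w, d z (Hf n m 0 w) <= e (S m)) M)
        as [N HN].
      { intros m n n' Hm [z [Hz1 [w Hw]]] [z' [Hz1' [w' Hw']]].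
        destruct (Nat.eq_dec n n') as [|Hne]; auto. exfalso.
        destruct (HHs (e m) (proj1 (Ep m))) as (_ & _ & _ & _ & HD & Hsep).
        pose proof (Hsep n n' Hne w w') as Hsp. unfold Hf in Hw, Hw'.
        pose proof (mind_le (fun m => D (e m)) M m Hm) as Hml. fold m0 in Hml. simpl in Hml.
        pose proof (Es m) as Esm. fold e in Esm.
        pose proof (Ht3 (HH (e m) n 0 w) z (HH (e m) n' 0 w')).
        pose proof (Ht3 z x0 (HH (e m) n' 0 w')).
        pose proof (Ht3 x0 z' (HH (e m) n' 0 w')).
        rewrite (Hs (HH (e m) n 0 w) z) in *. rewrite (Hs z x0) in *.
        lra. }
      exists N. intros n [y [Hy [x Hx]]]. apply HN. subst y.
      assert (Hrx : rho x > (rho x0) / 3).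
      { pose proof (Disp n x). pose proof (RL x0 (g n x)). pose proof (RL (g n x) x).
        rewrite (Hs (g n x) x) in *. lra. }
      revert Hy. unfold g, Gam. destruct (fl_spec (u x) (Hu0 x)) as [F1 F2].
      remember (fl (u x)) as j eqn:Ej. intros Hy.
      destruct (Pth_assoc d Hd (Hf n) e j (u x - INR j) x (Fok n) Ee ltac:(lra)) as [m [Hm [w Hw]]].
      exists m. split.
      * assert (Hux : u x < / ((rho x0) / 3)).
        { unfold u. apply Rinv_lt_contravar. pose proof (Rp x). nra. lra. }
        destruct (fl_spec (/ ((rho x0)/3))) as [G1 G2]. apply Rlt_le, Rinv_0_lt_compat; lra.
        assert (Hj : (j < S (fl (/ ((rho x0) / 3))))%nat).
        { apply INR_lt. rewrite S_INR. lra. }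
        destruct (parity j) as [k [(Hj' & _ & Hk)|(Hj' & _ & Hk)]]; unfold M; lia.
      * exists (Pth (Hf n) j (u x - INR j) x). split; auto. exists w. auto.
Qed.
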